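(* Let $\mathcal{R},\mathcal{V},\mathcal{R}',\mathcal{V}'$ be finite sets with $|\mathcal{R}|=|\mathcal{R}'|$. For any real number $t\ge1$, any positive number $k\le t$, any deterministic privacy mechanism $\Delta=(\mathcal{R},\mathcal{V},\mathcal{R}',\mathcal{V}',\Pi,\Delta)$ and any released table $\tau'$ on $(\mathcal{R}',\mathcal{V}')$: if $(\Delta,\tau')$ is $Pt$-anonymous, then $\tau'$ is $k$-anonymous.
   Context: A table on $(\mathcal{R},\mathcal{V})$ is a map $\mathcal{R}\to\mathcal{V}$; $\mathcal{T}$, $\mathcal{T}'$ denote the sets of tables on $(\mathcal{R},\mathcal{V})$ and $(\mathcal{R}',\mathcal{V}')$. For sets $X,Y$, $X\to Y$ is the set of maps $X\to Y$. A privacy mechanism is $(\mathcal{R},\mathcal{V},\mathcal{R}',\mathcal{V}',\Pi,\Delta)$ with $\Pi$ uniformly distributed over bijections $\mathcal{R}\to\mathcal{R}'$ and $\Delta$ a random variable in $\mathcal{T}\to(\mathcal{R}\to\mathcal{V}')$; it is a privacy mechanism from $T$ to $T'$ (random variables on $\mathcal{T},\mathcal{T}'$) if $T,\Pi,\Delta$ are mutually independent and $\Delta(T)=T'\circ\Pi$. It is deterministic if for each $\tau\in\mathcal{T}$ there is a unique table $\hat\tau$ with $\Delta(\tau)=\hat\tau$ (with probability one). $\tau'$ is $k$-anonymous if for every $r'\in\mathcal{R}'$ there are at least $k$ elements $\hat r'\in\mathcal{R}'$ with $\tau'(\hat r')=\tau'(r')$. $(\Delta,\tau')$ is $Pt$-anonymous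 (real $t\ge1$) if for all random variables $T,T'$ such that $\Delta$ is a privacy mechanism from $T$ to $T'$ and all $r\in\mathcal{R}$, $r'\in\mathcal{R}'$, $\Pr[\Pi(r)=r'\mid T'=\tau']\le1/t$. *)

(* Defs.v *)
From HB Require Import structures.
From mathcomp Require Import all_boot all_order all_algebra.
From mathcomp Require Import all_classical all_reals all_analysis.
Set Implicit Arguments. Unset Strict Implicit. Unset Printing Implicit Defensive.
Import Order.TTheory GRing.Theory Num.Theory.
Local Open Scope classical_set_scope.
Local Open Scope ring_scope.

(* A table on (Rw, V) is a map Rw -> V, i.e. an element of {ffun Rw -> V}. *)

Section PrivacyDefs.
Context {R : realType} {d : measure_display} {Omega : measurableType d}.
Variable P : probability Omega R.

Definition bijections (Rw Rw' : finType) : {set {ffun Rw -> Rw'}} :=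
  [set f : {ffun Rw -> Rw'} | injectiveb f && [forall y, exists x, f x == y]].

(* a random variable with values in a finite set (discrete sigma-algebra) *)
Definition is_rv (X : finType) (f : Omega -> X) : Prop :=
  forall x : X, measurable (f @^-1` [set x]).

Definition Pr (A : set Omega) : R := fine (P A).
Definition condPr (A B : set Omega) : R := Pr (A `&` B) / Pr B.

Definition indep3 (X Y Z : finType) (f : Omega -> X) (g : Omega -> Y)
    (h : Omega -> Z) : Prop :=
  forall (A : {set X}) (B : {set Y}) (C : {set Z}),
    P ([set w | f w \in A] `&` [set w | g w \in B] `&` [set w | h w \in C]) =
    (P [set w | f w \in A] * P [set w | g w \in B] * P [set w | h w \in C])%E.

Definition privacy_mechanism (Rw V Rw' V' : finType)
    (Pi : Omega -> {ffun Rw -> Rw'})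
    (Delta : Omega -> {ffun {ffun Rw -> V} -> {ffun Rw -> V'}}) : Prop :=
  [/\ is_rv Pi,
      (forall pi : {ffun Rw -> Rw'},
        P (Pi @^-1` [set pi]) =
        (if pi \in bijections Rw Rw' then (#|bijections Rw Rw'|%:R)^-1 else 0)%:E)
    & is_rv Delta].

Definition mechanism_from (Rw V Rw' V' : finType)
    (Pi : Omega -> {ffun Rw -> Rw'})
    (Delta : Omega -> {ffun {ffun Rw -> V} -> {ffun Rw -> V'}})
    (T : Omega -> {ffun Rw -> V}) (T' : Omega -> {ffun Rw' -> V'}) : Prop :=
  [/\ is_rv T, is_rv T', indep3 T Pi Delta
    & P [set w | forall r : Rw, Delta w (T w) r = T' w (Pi w r)] = 1%E].

Definition deterministic (Rw V V' : finType)
    (Delta : Omega -> {ffun {ffun Rw -> V} -> {ffun Rw -> V'}}) : Prop :=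
  forall tau : {ffun Rw -> V}, exists! th : {ffun Rw -> V'},
    P [set w | Delta w tau = th] = 1%E.

Definition released (Rw V Rw' V' : finType)
    (Pi : Omega -> {ffun Rw -> Rw'})
    (Delta : Omega -> {ffun {ffun Rw -> V} -> {ffun Rw -> V'}})
    (tau' : {ffun Rw' -> V'}) : Prop :=
  exists (T : Omega -> {ffun Rw -> V}) (T' : Omega -> {ffun Rw' -> V'}),
    mechanism_from Pi Delta T T' /\ 0 < Pr [set w | T' w = tau'].

(* (Delta, tau') is Pt-anonymous; the conditional probability is required
   to be <= 1/t whenever it is defined (conditioning event of positive prob.) *)
Definition Pt_anonymous (Rw V Rw' V' : finType)
    (Pi : Omega -> {ffun Rw -> Rw'})
    (Delta : Omega -> {ffun {ffun Rw -> V} -> {ffun Rw -> V'}})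
    (tau' : {ffun Rw' -> V'}) (t : R) : Prop :=
  forall (T : Omega -> {ffun Rw -> V}) (T' : Omega -> {ffun Rw' -> V'}),
    mechanism_from Pi Delta T T' ->
    forall (r : Rw) (r' : Rw'),
      0 < Pr [set w | T' w = tau'] ->
      condPr [set w | Pi w r = r'] [set w | T' w = tau'] <= t^-1.

End PrivacyDefs.

Definition k_anonymous {R : realType} (Rw' V' : finType)
    (tau' : {ffun Rw' -> V'}) (k : R) : Prop :=
  forall r' : Rw', k <= (#|[pred r2 | tau' r2 == tau' r']|)%:R.

(* Main.v *)
Require Import Defs.
From HB Require Import structures.
From mathcomp Require Import all_boot all_order all_algebra.
From mathcomp Require Import all_classical all_reals all_analysis.
Set Implicit Arguments. Unset Strict Implicit. Unset Printing Implicit Defensive.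
Import Order.TTheory GRing.Theory Num.Theory.
Local Open Scope classical_set_scope.
Local Open Scope ring_scope.

Lemma rv_meas_seq d (Om : measurableType d) (X : finType) (f : Om -> X) (s : seq X) :
  is_rv f -> measurable [set w | f w \in s].
Proof.
move=> hf; elim: s => [|x s IH].
  by rewrite (_ : [set w | _] = set0) //; apply/seteqP; split => w //=; rewrite in_nil.
rewrite (_ : [set w | _] = f @^-1` [set x] `|` [set w | f w \in s]).
  exact: measurableU.
apply/seteqP; split => w /=; rewrite in_cons.
  by case/orP => [/eqP ->|h]; [left|right].
by case => [->|->]; rewrite ?eqxx ?orbT.
Qed.

Lemma rv_meas d (Om : measurableType d) (X : finType) (f : Om -> X) (S : pred X) :
  is_rv f -> measurable [set w | S (f w)].
Proof.
move=> hf; rewrite (_ : [set w | _] = [set w | f w \in seq.filter S (enum X)]).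
  exact: rv_meas_seq.
by apply/seteqP; split => w /=; rewrite mem_filter mem_enum andbT.
Qed.

Lemma rv_comp d (Om : measurableType d) (X Y : finType) (f : Om -> X) (h : X -> Y) :
  is_rv f -> is_rv (h \o f).
Proof.
move=> hf y; rewrite (_ : _ @^-1` _ = [set w | h (f w) == y]).
  exact: (@rv_meas _ _ _ _ (fun x => h x == y) hf).
by apply/seteqP; split => w /=; [move=> ->|move/eqP].
Qed.

Lemma rv_pair d (Om : measurableType d) (X Y : finType) (f : Om -> X) (g : Om -> Y) :
  is_rv f -> is_rv g -> is_rv (fun w => (f w, g w)).
Proof.
move=> hf hg [x y]; rewrite (_ : _ @^-1` _ = f @^-1` [set x] `&` g @^-1` [set y]).
  exact: measurableI.
by apply/seteqP; split => w /=; [case=> -> ->|case=> -> ->].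
Qed.

Lemma L1 (R : realType) d (Om : measurableType d) (P : probability Om R) (A E : set Om) :
  measurable A -> measurable E -> P E = 1%E -> P (A `&` E) = P A.
Proof.
move=> mA mE PE.
have h0 : P (A `\` E) = 0%E.
  apply/eqP; rewrite eq_le measure_ge0 andbT.
  have : (P (A `\` E) <= P (~` E))%E.
    apply: le_measure; rewrite ?inE.
    - exact: measurableD.
    - exact: measurableC.
    - by move=> w [].
  move=> h; apply: le_trans h _. rewrite probability_setC // PE subee //.
rewrite (measureDI P mA mE) [X in (X + _)%E](_ : _ = 0%E) ?add0e //.
Qed.

Lemma sum_seq (R : realType) d (Om : measurableType d) (P : probability Om R)
  (X : finType) (f : Om -> X) (s : seq X) : is_rv f -> uniq s ->
  P [set w | f w \in s] = (\sum_(x <- s) P (f @^-1` [set x]))%E.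
Proof.
move=> hf; elim: s => [|x s IH] /=.
  by move=> _; rewrite big_nil (_ : [set w | _] = set0) ?measure0 //; apply/seteqP; split => w //=; rewrite in_nil.
case/andP => xs us; rewrite big_cons -IH //.
rewrite (_ : [set w | _] = f @^-1` [set x] `|` [set w | f w \in s]).
  rewrite measureU //; [exact: rv_meas_seq|].
  apply/seteqP; split => w //= [-> h]; by rewrite h in xs.
apply/seteqP; split => w /=; rewrite in_cons.
  by case/orP => [/eqP ->|h]; [left|right].
by case => [->|->]; rewrite ?eqxx ?orbT.
Qed.

Lemma sum_pred (R : realType) d (Om : measurableType d) (P : probability Om R)
  (X : finType) (f : Om -> X) (S : pred X) : is_rv f ->
  P [set w | S (f w)] = (\sum_(x | S x) P (f @^-1` [set x]))%E.
Proof.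
move=> hf; rewrite (_ : [set w | _] = [set w | f w \in seq.filter S (enum X)]).
  rewrite sum_seq //; last by rewrite filter_uniq // enum_uniq.
  rewrite (big_filter (enum X) S) big_enum_cond; by apply: eq_bigl => i.
by apply/seteqP; split => w /=; rewrite mem_filter mem_enum andbT.
Qed.

From mathcomp Require Import fingroup perm.
Local Close Scope ring_scope.
Definition Sset (Rw Rw' V' : finType) (th : {ffun Rw -> V'}) (tau' : {ffun Rw' -> V'}) :=
  [set pi in bijections Rw Rw' | [forall x, th x == tau' (pi x)]].

Lemma swap_le (Rw Rw' V' : finType) (th : {ffun Rw -> V'}) (tau' : {ffun Rw' -> V'})
  (r : Rw) (a b : Rw') : tau' a = tau' b ->
  #|[set pi in Sset th tau' | pi r == a]| <= #|[set pi in Sset th tau' | pi r == b]|.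
Proof.
move=> hab.
pose s := tperm a b.
pose g (pi : {ffun Rw -> Rw'}) := [ffun x => s (pi x)].
have ginj : injective g.
  move=> p1 p2 h; apply/ffunP => x; move/ffunP: h => /(_ x); rewrite !ffunE.
  exact: perm_inj.
rewrite -(card_imset _ ginj); apply: subset_leq_card; apply/fintype.subsetP => _ /imsetP [pi hpi ->].
move: hpi; rewrite !inE => /andP [/andP [/andP [/injectiveP hinj /forallP hsur] /forallP hth] /eqP hr].
have hts : forall z, tau' (s z) = tau' z.
  by move=> z; rewrite /s; case: tpermP => [->|->|] //; rewrite hab.
apply/andP; split; first apply/andP; first split.
- apply/andP; split.
    apply/injectiveP => x y; rewrite !ffunE => /perm_inj; exact: hinj.
  apply/forallP => y; have /existsP [x /eqP hx] := hsur (s y).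
  by apply/existsP; exists x; rewrite ffunE hx tpermK.
- by apply/forallP => x; rewrite ffunE hts.
- by rewrite ffunE hr /s tpermL.
Qed.

Lemma count_S (Rw Rw' V' : finType) (th : {ffun Rw -> V'}) (tau' : {ffun Rw' -> V'})
  (r : Rw) (r' : Rw') : th r = tau' r' ->
  #|Sset th tau'| = #|[pred r2 | tau' r2 == tau' r']| * #|[set pi in Sset th tau' | pi r == r']|.
Proof.
move=> hr.
rewrite -[#|Sset th tau'|]sum1_card.
rewrite (eq_bigr (fun pi : {ffun Rw -> Rw'} => \sum_(r2 | tau' r2 == tau' r') (pi r == r2 : nat))); last first.
  move=> pi; rewrite inE => /andP [_ /forallP /(_ r) /eqP hpi].
  rewrite (bigD1 (pi r)) /=; last by rewrite -hpi hr.
  rewrite eqxx big1 // => r2 /andP [_ hne]; rewrite eq_sym in hne; by rewrite (negbTE hne).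
rewrite exchange_big /=.
rewrite (eq_bigr (fun _ => #|[set pi in Sset th tau' | pi r == r']|)); last first.
  move=> r2 /eqP h2.
  rewrite (_ : \sum_(i in Sset th tau') (i r == r2 : nat) = #|[set pi in Sset th tau' | pi r == r2]|).
    by apply/eqP; rewrite eqn_leq !swap_le.
  rewrite -sum1_card big_mkcond [RHS]big_mkcond; apply: eq_bigr => pi _; rewrite inE.
  by case: (pi \in Sset th tau'); case: (pi r == r2).
rewrite -[RHS](sum_nat_const [pred r2 | tau' r2 == tau' r']).
by apply: eq_bigl => x; rewrite inE.
Qed.

Local Open Scope ring_scope.
From mathcomp Require Import ring lra.

Lemma meas_eq d (Om : measurableType d) (X Y : finType) (f : Om -> X) (g : X -> Y) (y : Y) :
  is_rv f -> measurable [set w | g (f w) = y].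
Proof. by move=> hf; exact: (rv_comp g hf y). Qed.

Theorem lemma2 (R : realType) (d : measure_display) (Omega : measurableType d)
  (P : probability Omega R) (Rw V Rw' V' : finType)
  (Pi : Omega -> {ffun Rw -> Rw'})
  (Delta : Omega -> {ffun {ffun Rw -> V} -> {ffun Rw -> V'}})
  (tau' : {ffun Rw' -> V'}) (t k : R) :
  #|Rw| = #|Rw'| -> 1 <= t -> 0 < k -> k <= t ->
  privacy_mechanism P Pi Delta -> deterministic P Delta ->
  released P Pi Delta tau' ->
  Pt_anonymous P Pi Delta tau' t ->
  k_anonymous tau' k.
Proof.
move=> hcard ht hk hkt [rvPi HPi rvD] hdet [T0 [T0' [[rvT0 rvT0' ind0 eq0] pos0]]] hPt r'.
have hex : forall tau : {ffun Rw -> V}, exists th : {ffun Rw -> V'},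
    P [set w | Delta w tau = th] = 1%E.
  by move=> tau; have [th [h _]] := hdet tau; exists th.
case: (boolp.choice hex) => hat hhat.
pose nb := #|bijections Rw Rw'|.
have PX : forall X : {set {ffun Rw -> Rw'}}, X \subset bijections Rw Rw' ->
    P [set w | Pi w \in X] = (#|X|%:R * nb%:R^-1)%:E.
  move=> X hX; rewrite (sum_pred P (fun pi => pi \in X) rvPi).
  transitivity (\sum_(x in X) (nb%:R^-1 : R)%:E)%E.
    by apply: bigop.eq_bigr => pi hpi; rewrite HPi (fintype.subsetP hX _ hpi).
  rewrite (@sumEFin R _ _ (fun x => x \in X) (fun _ => nb%:R^-1)).
  by rewrite sumr_const mulr_natl.
have Pbij : P [set w | Pi w \in bijections Rw Rw'] = 1%E.
  rewrite (sum_pred P (fun pi => pi \in bijections Rw Rw') rvPi).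
  rewrite -(probability_setT P) (_ : [set: Omega] = [set w | (fun _ => true) (Pi w)]) //.
  rewrite (sum_pred P (fun _ => true) rvPi) [LHS]big_mkcond; apply: bigop.eq_bigr => pi _.
  by case: ifP => h; rewrite HPi h.
by apply/seteqP; split.
pose Ddet (s : seq {ffun Rw -> V}) := [set w | all (fun tau => Delta w tau == hat tau) s].
have mDdet : forall s, measurable (Ddet s).
  move=> s; exact: (@rv_meas _ _ _ Delta (fun dl => all (fun tau => dl tau == hat tau) s) rvD).
have PDdet : forall s, P (Ddet s) = 1%E.
  elim=> [|x s IH].
    rewrite -(probability_setT P); congr (P _); by apply/seteqP; split.
  rewrite (_ : Ddet (x :: s) = [set w | Delta w x = hat x] `&` Ddet s).
    rewrite (L1 _ (mDdet s) IH) ?hhat //.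
    exact: (@meas_eq _ _ _ _ Delta (fun dl => dl x) (hat x) rvD).
  apply/seteqP; split => w /=.
    by case/andP => /eqP h1 h2.
  by case => h1 h2; rewrite /Ddet /= h1 eqxx; exact: h2.
have mEq : measurable [set w | forall r, Delta w (T0 w) r = T0' w (Pi w r)].
  have rv4 := rv_pair rvT0 (rv_pair rvPi (rv_pair rvD rvT0')).
  pose Q4 := fun x : {ffun Rw -> V} * ({ffun Rw -> Rw'} * ({ffun {ffun Rw -> V} -> {ffun Rw -> V'}} * {ffun Rw' -> V'})) => [forall r, x.2.2.1 x.1 r == x.2.2.2 (x.2.1 r)].
  rewrite (_ : [set w | _] = [set w | Q4 (T0 w, (Pi w, (Delta w, T0' w)))]).
    exact: (@rv_meas _ _ _ _ Q4 rv4).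
  apply/seteqP; split => w /= h.
    by apply/forallP => r; apply/eqP.
  by move=> r; apply/eqP; move/forallP: h.
pose Erel := [set w | T0' w = tau'].
pose Ebij := [set w | Pi w \in bijections Rw Rw'].
pose Edet := Ddet (enum {ffun Rw -> V}).
pose Eeq := [set w | forall r, Delta w (T0 w) r = T0' w (Pi w r)].
have mErel : measurable Erel := rvT0' tau'.
have mEbij : measurable Ebij := @rv_meas _ _ _ Pi (fun pi => pi \in bijections Rw Rw') rvPi.
have m1 : measurable (Erel `&` Ebij) := measurableI _ _ mErel mEbij.
have m2 : measurable (Erel `&` Ebij `&` Edet) := measurableI _ _ m1 (mDdet _).
have PF : P (Erel `&` Ebij `&` Edet `&` Eeq) = P Erel.
  by rewrite (L1 m2 mEq eq0) (L1 m1 (mDdet _) (PDdet _)) (L1 mErel mEbij Pbij).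
case: (pselect (exists w, (Erel `&` Ebij `&` Edet `&` Eeq) w)); last first.
  move=> hne; have e0 : Erel `&` Ebij `&` Edet `&` Eeq = set0.
    by apply/seteqP; split => x // hx; apply: hne; exists x.
  by move: pos0; rewrite /Pr -PF e0 measure0 /= ltxx.
move=> [w [[[hrel hbij] hdetw] heqw]].
pose tau := T0 w.
pose th := hat tau.
have hdw : forall x, Delta w x = hat x.
  move=> x; have hd : all (fun tau => Delta w tau == hat tau) (enum {ffun Rw -> V}) := hdetw.
  by move/allP: hd => /(_ x (mem_enum _ x)) /eqP.
have hbij' : Pi w \in bijections Rw Rw' := hbij.
have hth : forall x, th x = tau' (Pi w x).
  move=> x; rewrite /th -(hdw tau) /tau.
  have := heqw x; rewrite /= => ->.
  by have : T0' w = tau' := hrel; move=> ->.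
have [r hr] : exists r, Pi w r = r'.
  move: hbij'; rewrite inE => /andP [_ /forallP /(_ r') /existsP [r /eqP hr]].
  by exists r.
have hthr : th r = tau' r' by rewrite hth hr.
pose hT (p : {ffun Rw -> Rw'} * {ffun {ffun Rw -> V} -> {ffun Rw -> V'}}) : {ffun Rw' -> V'} :=
  [ffun y => if [pick x | p.1 x == y] is Some x then p.2 tau x else tau' y].
pose T := fun _ : Omega => tau.
pose T' := fun w => hT (Pi w, Delta w).
have rvpd := rv_pair rvPi rvD.
have K : forall w', Pi w' \in bijections Rw Rw' -> forall x, T' w' (Pi w' x) = Delta w' tau x.
  move=> w' hb x; rewrite /T' /hT ffunE /=.
  move: hb; rewrite inE => /andP [/injectiveP inj _].
  case: pickP => [x0 /eqP /inj -> //| h]; by have := h x; rewrite eqxx.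
have mech : mechanism_from P Pi Delta T T'.
  split.
  - exact: (rv_comp (fun _ => tau) rvPi).
  - exact: (rv_comp hT rvpd).
  - rewrite /indep3 => A B C; case hA: (tau \in A).
      rewrite (_ : [set _ : Omega | true] = [set w | T0 w \in finset.setT]); first exact: ind0.
      by apply/seteqP; split => x //=; rewrite finset.in_setT.
    rewrite (_ : [set _ : Omega | false] = set0); last by apply/seteqP; split => x //=.
    by rewrite !set0I measure0 !mul0e.
  - have mQ : measurable [set w | forall x, Delta w (T w) x = T' w (Pi w x)].
      pose Q2 := fun p : {ffun Rw -> Rw'} * {ffun {ffun Rw -> V} -> {ffun Rw -> V'}} => [forall x, p.2 tau x == hT p (p.1 x)].
      rewrite (_ : [set w | _] = [set w | Q2 (Pi w, Delta w)]).
        exact: (@rv_meas _ _ _ _ Q2 rvpd).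
      apply/seteqP; split => w' /= h.
        by apply/forallP => x; apply/eqP; exact: h.
      by move=> x; apply/eqP; exact: (forallP h x).
    rewrite -(L1 mQ mEbij Pbij) -Pbij; congr (P _); apply/seteqP; split => w' /=; first by case.
    by move=> hb; split => // x; rewrite /T K.
pose Edt := [set w | Delta w tau = th].
have mEdt : measurable Edt := @meas_eq _ _ _ _ Delta (fun dl => dl tau) th rvD.
pose G := Ebij `&` Edt.
have mG : measurable G := measurableI _ _ mEbij mEdt.
have PG : P G = 1%E by rewrite (L1 mEbij mEdt (hhat tau)).
have transfer : forall (Bs : set Omega) (X : {set {ffun Rw -> Rw'}}), measurable Bs ->
    (forall w, G w -> (Bs w <-> Pi w \in X)) -> P Bs = P [set w | Pi w \in X].
  move=> Bs X mB hBX.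
  rewrite -(L1 mB mG PG) -(L1 (@rv_meas _ _ _ _ (fun pi => pi \in X) rvPi) mG PG).
  congr (P _); apply/seteqP; split => w' [h g]; split => //; by apply/(hBX w' g).
have charB : forall w', G w' -> (T' w' = tau' <-> Pi w' \in Sset th tau').
  move=> w' [hb hd]; have hb' : Pi w' \in bijections Rw Rw' := hb.
  have hd' : Delta w' tau = th := hd.
  have := hb'; rewrite inE => /andP [/injectiveP inj /forallP sur].
  rewrite /Sset inE hb' /=; split.
    by move=> e; apply/forallP => x; rewrite -e K // hd'.
  move=> /forallP h; apply/ffunP => y; have /existsP [x /eqP <-] := sur y.
  by rewrite K // hd'; apply/eqP; exact: h x.
have charAB : forall w', G w' -> (([set w | Pi w r = r'] `&` [set w | T' w = tau']) w' <->
     Pi w' \in [set pi in Sset th tau' | pi r == r']).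
  move=> w' g; rewrite inE; split.
    by move=> [/= e1 /(charB w' g) e2]; rewrite e2 e1 eqxx.
  by case/andP => /(charB w' g) e2 /eqP e1; split.
pose S := Sset th tau'.
pose S1 := [set pi in S | pi r == r'].
have sS : S \subset bijections Rw Rw'.
  by apply/fintype.subsetP => x; rewrite /S /Sset inE => /andP [].
have sS1 : S1 \subset bijections Rw Rw'.
  by apply/fintype.subsetP => x; rewrite /S1 inE => /andP [/(fintype.subsetP sS)].
have mB : measurable [set w | T' w = tau'] := rv_comp hT rvpd tau'.
have mA : measurable [set w | Pi w r = r'] := @meas_eq _ _ _ _ Pi (fun p => p r) r' rvPi.
have PB : Pr P [set w | T' w = tau'] = #|S|%:R / nb%:R.
  by rewrite /Pr (transfer _ S mB charB) (PX S sS).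
have PAB : Pr P ([set w | Pi w r = r'] `&` [set w | T' w = tau']) = #|S1|%:R / nb%:R.
  by rewrite /Pr (transfer _ S1 (measurableI _ _ mA mB) charAB) (PX S1 sS1).
have pi0S : Pi w \in S.
  rewrite /S /Sset inE hbij' /=; apply/forallP => x; by rewrite hth.
have nbpos : (0 < nb)%N by apply/card_gt0P; exists (Pi w).
have Spos : (0 < #|S|)%N by apply/card_gt0P; exists (Pi w).
have hc := count_S hthr.
rewrite -/S -/S1 in hc.
set c := #|[pred r2 | tau' r2 == tau' r']| in hc *.
set m := #|S1| in hc PAB.
have cpos : (0 < c)%N by move: Spos; rewrite hc muln_gt0 => /andP [].
have mpos : (0 < m)%N by move: Spos; rewrite hc muln_gt0 => /andP [].
have Bpos : 0 < Pr P [set w | T' w = tau'].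
  by rewrite PB divr_gt0 // ltr0n.
have := hPt T T' mech r r' Bpos.
rewrite /condPr PAB PB hc.
have -> : (m%:R / nb%:R) / ((c * m)%N%:R / nb%:R) = (c%:R)^-1 :> R.
  rewrite natrM; field.
  by rewrite !pnatr_eq0 -!lt0n cpos mpos nbpos.
have tpos : 0 < t by apply: lt_le_trans ht; exact: ltr01.
rewrite lef_pV2 ?posrE ?ltr0n // => htc.
exact: le_trans hkt htc.
Qed.
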